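(* Let $A$ be a $d$-dimensional polystochastic matrix of order $n$ and $1\le k\le d-1$. Then $\operatorname{per}A>0$ if and only if there exist $n$ pairwise diagonally located parallel $k$-dimensional planes $\Gamma_1,\dots,\Gamma_n$ of $A$ such that the $(k+1)$-dimensional matrix $(\Gamma_1,\dots,\Gamma_n)$ has positive permanent. Equivalently, $\operatorname{per}A=0$ if and only if $\operatorname{per}(\Gamma_1,\dots,\Gamma_n)=0$ for all families of $n$ pairwise diagonally located parallel $k$-dimensional planes $\Gamma_1,\dots,\Gamma_n$ of $A$.
   Context: A $d$-dimensional matrix of order $n$ is an array $A=(a_\alpha)_{\alpha\in I_n^d}$, $I_n^d=\{0,\dots,n-1\}^d$. A $k$-dimensional plane of direction $(i_1,\dots,i_{d-k})$ is obtained by fixing coordinates $i_1,\dots,i_{d-k}$ to values $(\beta_1,\dots,\beta_{d-k})$ and letting the other $k$ coordinates vary; it is a $k$-dimensional matrix of order $n$. Two planes are parallel if they have the same direction, and parallel planes with fixed values $(\beta_j)$ and $(\gamma_j)$ are diagonally located if $\beta_j\ne\gamma_j$ for all $j$. For parallel $k$-dimensional planes $\Gamma_1,\dots,\Gamma_n$, $(\Gamma_1,\dots,\Gamma_n)$ denotes the $(k+1)$-dimensional matrix of order $n$ whose hyperplanes of the first direction are $\Gamma_1,\dots,\Gamma_n$ in this order. $A$ is polystochastic if it is nonnegative and each line (1-dimensional plane) sums to $1$. A diagonal is a set of $n$ indices any two of which differ in every coordinate; $\operatorname{per}A=\sum_p\prod_{\alpha\in p}a_\alpha$ over all diagonals $p$.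 *)

(* Defs.v *)
From mathcomp Require Import all_boot all_order all_algebra.
From mathcomp Require Import reals.
Set Implicit Arguments. Unset Strict Implicit. Unset Printing Implicit Defensive.
Import Order.TTheory GRing.Theory Num.Theory.
Local Open Scope ring_scope.

Definition idx (d n : nat) := {ffun 'I_d -> 'I_n}.

Definition mat (R : Type) (d n : nat) := idx d n -> R.

Definition upd (d n : nat) (alpha : idx d n) (i : 'I_d) (t : 'I_n) : idx d n :=
  [ffun j => if j == i then t else alpha j].

Definition polystochastic (R : realType) (d n : nat) (A : mat R d n) : Prop :=
  (forall alpha, 0 <= A alpha) /\
  (forall (i : 'I_d) (alpha : idx d n), \sum_(t < n) A (upd alpha i t) = 1).

Definition is_diagonal (d n : nat) (p : {set idx d n}) : bool :=
  (#|p| == n) &&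
  [forall a in p, forall b in p, (a != b) ==> [forall i, a i != b i]].

Definition per (R : realType) (d n : nat) (A : mat R d n) : R :=
  \sum_(p : {set idx d n} | is_diagonal p) \prod_(a in p) A a.

(* A family of n parallel planes of direction S (the set of fixed coordinates,
   of size d-k), plane j having fixed values beta j on S (values of beta j
   outside S are irrelevant). *)
Definition pairwise_diag_located (d n : nat) (S : {set 'I_d})
    (beta : 'I_n -> idx d n) : Prop :=
  forall j j' : 'I_n, j != j' -> forall i, i \in S -> beta j i != beta j' i.

(* The (k+1)-dimensional matrix (Gamma_1, ..., Gamma_n): the first coordinate
   selects the plane, the remaining k coordinates are the free coordinates
   (those outside S) listed in increasing order. *)
Definition stack (R : realType) (d n : nat) (k : nat) (A : mat R d n)
    (S : {set 'I_d}) (beta : 'I_n -> idx d n) : mat R k.+1 n :=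
  fun gamma => A [ffun i : 'I_d => if i \in S then beta (gamma ord0) i
                     else gamma (inord (index i (enum (~: S))).+1)].
Arguments stack {R d n} k A S beta _.

(* Main.v *)
Require Import Defs.
From mathcomp Require Import all_boot all_order all_algebra.
From mathcomp Require Import reals.
From mathcomp Require Import zify.
Import Order.TTheory GRing.Theory Num.Theory.
Local Open Scope ring_scope.

Lemma per_ge (R : realType) (d n : nat) (M : mat R d n) (q : {set idx d n}) :
  (forall x, 0 <= M x) -> is_diagonal q -> \prod_(a in q) M a <= per M.
Proof.
move=> h0 hq; rewrite /per (bigD1 q) //= lerDl.
apply: sumr_ge0 => p _; apply: prodr_ge0 => a _; exact: h0.
Qed.

Lemma per_ge0 (R : realType) (d n : nat) (M : mat R d n) :
  (forall x, 0 <= M x) -> 0 <= per M.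
Proof.
move=> h0; apply: sumr_ge0 => p _; apply: prodr_ge0 => a _; exact: h0.
Qed.

Lemma per_pos (R : realType) (d n : nat) (M : mat R d n) :
  0 < per M -> exists q, is_diagonal q /\ 0 < \prod_(a in q) M a.
Proof.
move=> hp; case: (boolP [exists q, is_diagonal q && (0 < \prod_(a in q) M a)]).
  by move=> /existsP [q /andP [h1 h2]]; exists q.
move=> /existsPn hn; exfalso; move: hp; apply/negP; rewrite -leNgt.
apply: sumr_le0 => p hp; move: (hn p); rewrite hp /= leNgt; done.
Qed.

Lemma stack_to_A (R : realType) (d n k : nat) (A : mat R d n)
  (S : {set 'I_d}) (beta : 'I_n -> idx d n) (i0 : 'I_d) :
  (forall x, 0 <= A x) -> pairwise_diag_located S beta ->
  0 < per (stack k A S beta) -> 0 < per A.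
Proof.
move=> h0 hpd /per_pos [q [hq hpos]].
set f : idx k.+1 n -> idx d n := fun gamma => [ffun i : 'I_d => if i \in S then beta (gamma ord0) i
                     else gamma (inord (index i (enum (~: S))).+1)].
have key : forall a b, a \in q -> b \in q -> a != b -> forall i, f a i != f b i.
  move: hq => /andP [_ /forallP hq] a b ha hb hab i.
  have := hq a; rewrite ha /= => /forallP /(_ b); rewrite hb /= hab /= => /forallP hall.
  rewrite /f !ffunE; case: ifP => iS; last exact: hall.
  apply: hpd => //; exact: hall.
have finj : {in q &, injective f}.
  move=> a b ha hb hab; apply/eqP; apply/negPn/negP => hne.
  by move: (key a b ha hb hne i0); rewrite hab eqxx.
have hd : is_diagonal (f @: q).
  apply/andP; split.
    by rewrite (card_in_imset finj); case/andP: hq.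
  apply/forallP => x; apply/implyP => /imsetP [a ha ->].
  apply/forallP => y; apply/implyP => /imsetP [b hb ->].
  apply/implyP => hne; apply/forallP => i; apply: key => //.
  by apply: contraNneq hne => ->.
apply: (@lt_le_trans _ _ (\prod_(a in f @: q) A a)); last exact: per_ge h0 hd.
by rewrite big_imset.
Qed.

Lemma A_to_stack (R : realType) (d n k : nat) (A : mat R d n) (i0 : 'I_d) :
  (forall x, 0 <= A x) -> (k <= d)%N -> 0 < per A ->
  exists (S : {set 'I_d}) (beta : 'I_n -> idx d n),
       [/\ #|S| = (d - k)%N, pairwise_diag_located S beta
         & 0 < per (stack k A S beta)].
Proof.
move=> h0 hkd /per_pos [p [hp hpos]].
have hdk : (d - k <= d)%N by rewrite leq_subr.
pose S : {set 'I_d} := [set widen_ord hdk j | j : 'I_(d - k)].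
have cS : #|S| = (d - k)%N.
  rewrite card_imset ?card_ord //; move=> x y /(congr1 val) /= h; exact: val_inj.
move: hp => /andP [/eqP cp /forallP hp].
have hall : forall a b, a \in p -> b \in p -> a != b -> forall i, a i != b i.
  move=> a b ha hb hab i; have := hp a; rewrite ha /= => /forallP /(_ b).
  by rewrite hb /= hab /= => /forallP.
pose beta (j : 'I_n) : idx d n := nth [ffun _ => j] (enum p) j.
pose pos (a : idx d n) : 'I_n := insubd (a i0) (index a (enum p)).
have hpos_val : forall a, a \in p -> val (pos a) = index a (enum p).
  move=> a ha; rewrite val_insubd; have -> //: (index a (enum p) < n)%N.
  rewrite -[X in (_ < X)%N]cp cardE index_mem.
  by rewrite mem_enum ha.
have hbeta : forall a, a \in p -> beta (pos a) = a.
  by move=> a ha; rewrite /beta hpos_val // nth_index // mem_enum.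
set e := enum (~: S).
have se : size e = k.
  have := cardsC S; rewrite card_ord cS -cardE => h.
  by apply/eqP; rewrite -(eqn_add2l (d - k)) h subnK.
pose h (c : 'I_k.+1) : 'I_d := nth i0 e c.-1.
pose g (a : idx d n) : idx k.+1 n :=
  [ffun c : 'I_k.+1 => if c == ord0 then pos a else a (h c)].
have hsg : forall a, a \in p -> stack k A S beta (g a) = A a.
  move=> a ha; rewrite /stack; congr A; apply/ffunP => i; rewrite !ffunE.
  case: ifP => iS; first by rewrite eqxx hbeta.
  have hie : i \in e by rewrite mem_enum in_setC iS.
  have hm : ((index i e).+1 < k.+1)%N by rewrite ltnS -se index_mem.
  have -> : (inord (index i e).+1 == ord0 :> 'I_k.+1) = false.
    by apply/negbTE; rewrite -val_eqE /= inordK.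
  by rewrite /h inordK //= nth_index.
have key : forall a b, a \in p -> b \in p -> a != b -> forall c, g a c != g b c.
  move=> a b ha hb hab c; rewrite !ffunE; case: ifP => _; last exact: hall.
  apply: contra_neq hab => hab; by rewrite -(hbeta a ha) -(hbeta b hb) hab.
have ginj : {in p &, injective g}.
  move=> a b ha hb hab; apply/eqP; apply/negPn/negP => hne.
  by move: (key a b ha hb hne ord0); rewrite hab eqxx.
have hd : is_diagonal (g @: p).
  apply/andP; split.
    by rewrite (card_in_imset ginj) cp.
  apply/forallP => x; apply/implyP => /imsetP [a ha ->].
  apply/forallP => y; apply/implyP => /imsetP [b hb ->].
  apply/implyP => hne; apply/forallP => i; apply: key => //.
  by apply: contraNneq hne => ->.
exists S, beta; split => //.
  move=> j j' hjj' i _; rewrite /beta.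
  have hj : forall j0 : 'I_n, (j0 < size (enum p))%N by move=> j0; rewrite -cardE cp.
  have bin : forall j0 : 'I_n, beta j0 \in p.
    by move=> j0; rewrite -mem_enum /beta mem_nth.
  apply: hall; [exact: bin | exact: bin | ]; rewrite (set_nth_default [ffun _ => j] [ffun _ => j'] (hj j')).
  by rewrite nth_uniq ?enum_uniq.
apply: (@lt_le_trans _ _ (\prod_(a in g @: p) stack k A S beta a)); last first.
  by apply: per_ge hd => x; rewrite /stack.
rewrite big_imset //=; under eq_bigr => a ha do rewrite hsg //.
done.
Qed.

Theorem mainTheorem5 (R : realType) (d n k : nat) (A : mat R d n)
  (hA : polystochastic A) (hk1 : (1 <= k)%N) (hk2 : (k <= d - 1)%N) :
  (0 < per A <->
     exists (S : {set 'I_d}) (beta : 'I_n -> idx d n),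
       [/\ #|S| = (d - k)%N, pairwise_diag_located S beta
         & 0 < per (stack k A S beta)])
  /\
  (per A = 0 <->
     forall (S : {set 'I_d}) (beta : 'I_n -> idx d n),
       #|S| = (d - k)%N -> pairwise_diag_located S beta ->
       per (stack k A S beta) = 0).
Proof.
have h0 : forall x, 0 <= A x by case: hA.
have hd : (0 < d)%N by lia.
have hkd : (k <= d)%N by apply: leq_trans hk2 (leq_subr _ _).
pose i0 : 'I_d := Ordinal hd.
have P1 : 0 < per A <->
     exists (S : {set 'I_d}) (beta : 'I_n -> idx d n),
       [/\ #|S| = (d - k)%N, pairwise_diag_located S beta
         & 0 < per (stack k A S beta)].
  split; first exact: A_to_stack i0 h0 hkd.
  by move=> [S [beta [_ hpd hp]]]; exact: stack_to_A i0 h0 hpd hp.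
split => //; split.
  move=> hz S beta cS hpd; apply/eqP; rewrite eq_le per_ge0 ?andbT; last first.
    by move=> x; rewrite /stack.
  rewrite leNgt; apply/negP => hp.
  have : 0 < per A by apply/P1; exists S, beta.
  by rewrite hz ltxx.
move=> hall; apply/eqP; rewrite eq_le per_ge0 // andbT leNgt; apply/negP.
by move=> /P1 [S [beta [cS hpd]]]; rewrite hall // ltxx.
Qed.
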